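(* Let $r$ be a positive integer. Then $\omega(n)\to\infty$ as $n\to\infty$ through elements of $F_r$.
   Context: For a positive integer $r$, $S_r$ is the multiplicative arithmetic function with $S_r(p^{\alpha})=0$ if $p\leq r$ and $S_r(p^{\alpha})=p^{\alpha-1}(p-r)$ if $p>r$, for all primes $p$ and positive integers $\alpha$. $B_r=\{n\in\mathbb{N}: S_r(n)>0\}$ (positive integers whose smallest prime factor exceeds $r$, together with $1$). $F_r$ is the set of $n\in B_r$ such that $S_r(n)<S_r(m)$ for all $m\in B_r$ with $m>n$. $\omega(n)$ is the number of distinct prime factors of $n$. *)

(* Defs.v *)
From mathcomp Require Import all_boot.
Set Implicit Arguments. Unset Strict Implicit. Unset Printing Implicit Defensive.

Definition Sr (r n : nat) : nat :=
  \prod_(p <- primes n)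
     (if r < p then p ^ (logn p n).-1 * (p - r) else 0).

Definition inB (r n : nat) : Prop := 0 < n /\ 0 < Sr r n.

Definition inF (r n : nat) : Prop :=
  inB r n /\ forall m, inB r m -> n < m -> Sr r n < Sr r m.

Definition omega (n : nat) : nat := size (primes n).

(* Main.v *)
Require Import Defs.
From mathcomp Require Import all_boot zify.
Set Implicit Arguments. Unset Strict Implicit. Unset Printing Implicit Defensive.

Lemma decomp n : 0 < n -> n = \prod_(p <- primes n) p ^ logn p n.
Proof. by move=> n0; rewrite {1}(prod_prime_decomp n0) prime_decompE big_map. Qed.

Lemma Sr_gt0_prime r m p : 0 < Sr r m -> p \in primes m -> r < p.
Proof.
move=> S0 pm; have := @gt0_prodn_seq _ _ _ _ S0 p pm isT; case: ifP => // _; rewrite ltnn.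
Qed.

Lemma Sr_gt0 r m : (forall p, p \in primes m -> r < p) -> 0 < Sr r m.
Proof.
move=> H; rewrite /Sr big_seq_cond; apply: prodn_cond_gt0 => p /andP[pm _].
rewrite (H p pm) muln_gt0 expn_gt0 subn_gt0 H // andbT.
by move: pm; rewrite mem_primes => /and3P[/prime_gt0 -> _ _].
Qed.

Lemma omega_bound r n : inB r n -> n <= (r.+1) ^ omega n * Sr r n.
Proof.
case=> n0 S0; rewrite {1}(@decomp n n0) /omega /Sr.
have -> : r.+1 ^ size (primes n) = \prod_(p <- primes n) r.+1.
  by rewrite big_const_seq count_predT; elim: size => //= k <-; rewrite expnS.
rewrite -big_split /= big_seq [X in _ <= X]big_seq; apply: leq_prod => p pm.
have rp := Sr_gt0_prime S0 pm; rewrite rp.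
have : 0 < logn p n by rewrite logn_gt0.
case: (logn p n) => // a _ /=; rewrite expnS.
have : p <= r.+1 * (p - r) by nia.
move=> h; rewrite mulnCA [p ^ a * _]mulnC; exact: leq_mul.
Qed.

Lemma Sr_T r m T : 0 < m -> 0 < Sr r m -> uniq T -> {subset T <= primes m} ->
  Sr r m * \prod_(p <- T) p <= m * \prod_(p <- T) (p - r).
Proof.
move=> m0 S0 uT sT.
have perm : perm_eq [seq p <- primes m | p \in T] T.
  apply: uniq_perm; first by rewrite filter_uniq // primes_uniq.
    by [].
  move=> x; rewrite mem_filter; apply/andP/idP => [[]//|xT]; split=> //.
  exact: sT.
rewrite /Sr [X in _ <= X * _](decomp m0).
have E (F : nat -> nat) : \prod_(p <- primes m) F p =
   \prod_(p <- T) F p * \prod_(p <- primes m | p \notin T) F p.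
  by rewrite (@bigID _ _ _ _ (primes m) (fun p => p \in T) predT F) -big_filter (perm_big _ perm).
rewrite !E mulnAC [X in _ <= X]mulnAC; apply: leq_mul.
  rewrite -big_split -[X in _ <= X]big_split /=.
  rewrite big_seq [X in _ <= X]big_seq; apply: leq_prod => p /sT pm.
  rewrite (Sr_gt0_prime S0 pm).
  have : 0 < logn p m by rewrite logn_gt0.
  case: (logn p m) => // a _ /=; by rewrite expnS [X in X <= _]mulnC mulnA.
rewrite big_seq_cond [X in _ <= X]big_seq_cond; apply: leq_prod => p /andP[pm _].
rewrite (Sr_gt0_prime S0 pm).
have : 0 < logn p m by rewrite logn_gt0.
case: (logn p m) => // a _ /=; rewrite expnS mulnC leq_mul2r leq_subr orbT //.
Qed.

Lemma count_div p X : 0 < p -> \sum_(1 <= x < X.+1) (p %| x) = X %/ p.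
Proof.
move=> p0; elim: X => [|X IH]; first by rewrite big_geq // div0n.
by rewrite big_nat_recr //= IH divnS // addnC.
Qed.

Definition smooth k x := all (fun p => p < k) (primes x).

Lemma count_bound k X :
   X <= \sum_(k <= p < X.+1 | prime p) X %/ p + \sum_(1 <= x < X.+1) smooth k x.
Proof.
have -> : \sum_(k <= p < X.+1 | prime p) X %/ p =
   \sum_(1 <= x < X.+1) \sum_(k <= p < X.+1 | prime p) (p %| x).
  rewrite exchange_big_nat /=; apply: eq_bigr => p /prime_gt0 p0.
  by rewrite count_div.
rewrite -big_split /=.
have {1}-> : X = \sum_(1 <= x < X.+1) 1 by rewrite sum_nat_const_nat muln1 subn1.
rewrite big_seq [X in _ <= X]big_seq; apply: leq_sum => x; rewrite mem_index_iota => /andP[x0 xX].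
case sm: (smooth k x); first by rewrite addn1.
rewrite addn0 lt0n sum_nat_seq_neq0.
move: sm; rewrite /smooth => /negbT; rewrite -has_predC => /hasP [p pm /= pk].
apply/hasP; exists p.
  rewrite mem_index_iota leqNgt pk /=.
  move: pm; rewrite mem_primes => /and3P[_ _ /dvdn_leq]; move=> /(_ x0) px.
  exact: leq_ltn_trans px xX.
by move: pm; rewrite mem_primes => /and3P[-> _ ->].
Qed.

Lemma logn_bound p x e : 0 < x -> x <= 2 ^ e -> logn p x <= e.
Proof.
move=> x0 xe; case pm: (p \in primes x); last first.
  by move: pm; rewrite -logn_gt0 lt0n => /negbFE/eqP ->.
have pp : prime p by move: pm; rewrite mem_primes => /andP[].
rewrite -(@leq_exp2l 2) //; apply: leq_trans xe.
apply: leq_trans (dvdn_leq x0 (pfactor_dvdnn p x)).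
rewrite leq_exp2r ?prime_gt1 // logn_gt0 pm //.
Qed.

Lemma smooth_count k X e : X <= 2 ^ e ->
  \sum_(1 <= x < X.+1) smooth k x <= e.+1 ^ k.
Proof.
move=> Xe.
have -> : \sum_(1 <= x < X.+1) smooth k x =
     #|[pred i : 'I_X.+1 | (0 < i) && smooth k i]|.
  rewrite -sum1_card.
  transitivity (\sum_(0 <= i < X.+1) ((0 < i) && smooth k i)).
    rewrite [RHS]big_ltn //= add0n; by apply: eq_big_nat => i /andP[i0 _]; rewrite i0.
  rewrite (@big_mkord _ 0 addn X.+1 xpredT) [RHS]big_mkcond /=; apply: eq_bigr => i _; rewrite inE.
  by case: (_ && _).
pose f (x : 'I_X.+1) : {ffun 'I_k -> 'I_e.+1} := [ffun i : 'I_k => inord (logn i x)].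
have -> : e.+1 ^ k = #|{ffun 'I_k -> 'I_e.+1}| by rewrite card_ffun !card_ord.
apply: (@leq_card_in _ _ f) => x y /andP[x0 sx] /andP[y0 sy] fxy.
have xe : x <= 2 ^ e by rewrite -ltnS (leq_trans (ltn_ord x)).
have ye : y <= 2 ^ e by rewrite -ltnS (leq_trans (ltn_ord y)).
apply: val_inj; apply: eqn_from_log => // p /=.
case: (ltnP p k) => pk.
  have := congr1 (fun g : {ffun 'I_k -> 'I_e.+1} => val (g (Ordinal pk))) fxy; rewrite /f !ffunE /=.
  by rewrite !inordK // ltnS logn_bound.
have zero z : smooth k z -> logn p z = 0.
  move=> sz; apply/eqP; rewrite -leqn0 leqNgt logn_gt0; apply/negP => pz.
  by move/allP: sz => /(_ p pz); rewrite ltnNge pk.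
by rewrite !zero.
Qed.

Lemma pow2_sq j : 4 <= j -> j ^ 2 <= 2 ^ j.
Proof.
elim: j => // j IH; rewrite leq_eqVlt => /orP[/eqP <- //|].
rewrite ltnS => j4; have h := IH j4; rewrite [2 ^ _]expnS.
have : j.+1 ^ 2 <= 2 * j ^ 2 by rewrite !expnS expn0; nia.
move=> h2; apply: leq_trans h2 _; exact: leq_mul.
Qed.

Lemma exp_choice k : exists e, k <= e /\ 4 * e.+1 ^ k <= 2 ^ e.
Proof.
set j := k + 4; have hj := @pow2_sq j (leq_addl _ _).
exists (2 ^ j); split; first by apply: leq_trans hj; rewrite /j; nia.
have h1 : (2 ^ j).+1 <= 2 ^ j.+1 by rewrite expnS; have := expn_gt0 2 j; lia.
apply: (@leq_trans (2 ^ 2 * (2 ^ j.+1) ^ k)).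
  rewrite leq_mul2l /=; case: (posnP k) => [->//|k0]; by rewrite leq_exp2r.
rewrite -expnM -expnD leq_exp2l //; apply: leq_trans hj; rewrite /j; nia.
Qed.

From mathcomp Require Import all_order all_algebra ring lra.
Import Order.TTheory GRing.Theory Num.Theory.
Local Open Scope ring_scope.

Lemma erdos k : exists N, (k <= N)%N /\
  1 / 2 <= \sum_(k <= p < N | prime p) (p%:R : rat)^-1.
Proof.
have [e [ke he]] := exp_choice k.
set X := (2 ^ e)%N.
have h := count_bound k X.
have hs := @smooth_count k X e (leqnn _).
exists X.+1; split; first by apply: leq_trans ke _; exact: leq_trans (ltnW (ltn_expl e (isT : (1 < 2)%N))) (leqnSn _).
have h2 : (X <= \sum_(k <= p < X.+1 | prime p) X %/ p + e.+1 ^ k)%N.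
  by apply: leq_trans h _; rewrite leq_add2l.
have X0 : (0 < X)%N by rewrite expn_gt0.
move: h2 he; rewrite -!(ler_nat rat) natrD natr_sum natrM.
set S := \sum_(k <= p < X.+1 | prime p) (p%:R : rat)^-1.
have hS : \sum_(k <= p < X.+1 | prime p) (X %/ p)%:R <= X%:R * S.
  rewrite /S mulr_sumr; apply: ler_sum => p /prime_gt0 p0.
  rewrite ler_pdivlMr ?ltr0n // -natrM ler_nat; exact: leq_divM.
have : (0 : rat) < X%:R by rewrite ltr0n.
move: hS; set A := \sum_(_ <= _ < _ | _) _; set B := (e.+1 ^ k)%:R.
have -> : (4%N%:R : rat) = 4 by [].
move=> hS hX h1 h2.
have : 3 / 4 * X%:R <= X%:R * S by lra.
move=> h3; rewrite -(@ler_pM2l _ X%:R) //; lra.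
Qed.

Lemma blocks M k : exists N, (k <= N)%N /\
  M%:R / 2 <= \sum_(k <= p < N | prime p) (p%:R : rat)^-1.
Proof.
elim: M => [|M [N1 [kN1 h1]]]; first by exists k; rewrite mul0r big_geq.
have [N2 [N12 h2]] := erdos N1.
exists N2; split; first exact: leq_trans kN1 N12.
rewrite (big_cat_nat kN1 N12) /= -addn1 natrD; lra.
Qed.

Lemma prod_sum_le (r : nat) (s : seq nat) : (0 < r)%N ->
  (forall p, p \in s -> (r < p)%N) ->
  0 <= \prod_(p <- s) (1 - r%:R / p%:R : rat) <= 1 /\
  \prod_(p <- s) (1 - r%:R / p%:R) * (1 + \sum_(p <- s) (p%:R : rat)^-1) <= 1.
Proof.
move=> r0; elim: s => [|q s IH] H; first by rewrite !big_nil; split; [apply/andP; split|]; lra.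
have [/andP[h0 h1] h2] := IH (fun p ps => H p (@mem_behead _ (q :: s) p ps)).
have rq : (r < q)%N := H q (mem_head _ _).
rewrite !big_cons.
set B := \prod_(_ <- _) _ in h0 h1 h2 *; set S := \sum_(_ <- _) _ in h2 *.
have q0 : (0 : rat) < q%:R by rewrite ltr0n; exact: leq_ltn_trans rq.
set a := (q%:R : rat)^-1.
have a0 : 0 <= a by rewrite /a invr_ge0 ltW.
have a1 : a <= 1 by rewrite /a invr_le1 // ?ler1n; [exact: leq_ltn_trans rq | exact: unitf_gt0].
have rle : a <= r%:R / q%:R.
  by rewrite /a ler_pdivlMr // mulVf ?gt_eqF // ler1n.
have rle1 : r%:R / q%:R <= (1 : rat).
  by rewrite ler_pdivrMr // mul1r ler_nat ltnW.
have S0 : 0 <= S by rewrite /S; apply: sumr_ge0 => p _; rewrite invr_ge0 ler0n.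
set b := 1 - r%:R / q%:R.
have b0 : 0 <= b by rewrite /b; lra.
have b1 : b <= 1 - a by rewrite /b; lra.
split; first by apply/andP; split; nra.
have e1 : b * B * (1 + (a + S)) = b * (B * (1 + S)) + b * a * B by ring.
rewrite e1.
have t1 : b * (B * (1 + S)) <= b by rewrite ler_piMr.
have t2 : b * a * B <= b * a by rewrite ler_piMr // mulr_ge0.
have t3 : b * (1 + a) <= (1 - a) * (1 + a) by rewrite ler_wpM2r //; lra.
nra.
Qed.

Lemma key r M : (0 < r)%N -> exists T : seq nat,
  [/\ uniq T, all prime T, all (fun p => r < p)%N T &
      (M * \prod_(p <- T) (p - r) < \prod_(p <- T) p)%N].
Proof.
move=> r0; have [N [_ hN]] := blocks (M.*2.+2) r.+1.
set T := [seq p <- index_iota r.+1 N | prime p].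
have memT p : p \in T -> prime p /\ (r < p)%N.
  by rewrite mem_filter mem_index_iota => /andP[-> /andP[-> _]].
exists T; split.
- by rewrite filter_uniq // iota_uniq.
- by apply/allP => p /memT [].
- by apply/allP => p /memT [].
rewrite -big_filter -/T in hN.
have [/andP[h0 h1] h2] := @prod_sum_le r T r0 (fun p pT => (memT p pT).2).
set rho := \prod_(p <- T) _ in h0 h1 h2.
set S := \sum_(p <- T) _ in hN h2.
have e2 : ((M.*2.+2)%:R / 2 : rat) = M%:R + 1.
  by rewrite -addn2 -muln2 natrD natrM; field.
rewrite e2 in hN.
have P0 : (0 : rat) < \prod_(p <- T) p%:R.
  rewrite big_seq; apply: prodr_gt0 => p /memT [/prime_gt0 p0 _]; by rewrite ltr0n.
have E : \prod_(p <- T) (p - r)%:R = \prod_(p <- T) (p%:R : rat) * rho.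
  rewrite /rho -big_split /= big_seq [RHS]big_seq; apply: eq_bigr => p /memT [pp rp].
  have p0 : (p%:R : rat) != 0 by rewrite pnatr_eq0 -lt0n prime_gt0.
  by rewrite natrB ?(ltnW rp) // mulrBr mulr1 mulrCA mulfV // mulr1.
rewrite -(ltr_nat rat) natrM !natr_prod E.
have t : 0 <= rho * (S - (M%:R + 1)) by apply: mulr_ge0 => //; lra.
have h : M%:R * rho < 1.
  case: (eqVneq rho 0) => [->|rn0]; first by rewrite mulr0 ltr01.
  have : 0 < rho by rewrite lt_def rn0 h0.
  move=> rp; nra.
 by rewrite mulrCA -[X in _ < X]mulr1 ltr_pM2l.
Qed.


Local Close Scope ring_scope.


Theorem corollary3p1 (r : nat) (hr : 0 < r) :
  forall K : nat, exists N : nat, forall n : nat,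
    inF r n -> N < n -> K <= omega n.
Proof.
move=> K.
have [q0 rq0 pq0] := prime_above r.
have [T [uT pT rT hT]] := key (q0 * (r.+1)^K) hr.
set P := \prod_(p <- T) p in hT *.
set Bv := \prod_(p <- T) (p - r) in hT *.
exists (P * q0) => n [[n0 Sn0] Fn] Nn.
rewrite leqNgt; apply/negP => wK.
have P0 : 0 < P.
  by rewrite /P big_seq; apply: prodn_cond_gt0 => p pT'; apply: prime_gt0; move/allP: pT; apply.
have q00 : 0 < q0 by apply: prime_gt0.
have ex : exists j, n < P * q0 ^ j.
  exists n; apply: leq_trans (ltn_expl n (prime_gt1 pq0)) _.
  by rewrite leq_pmull.
case: (ex_minnP ex) => j hj hmin.
case: j hj hmin => [|j] hj hmin.
  by move: hj; rewrite expn0 muln1 => /(ltn_trans Nn); rewrite ltnNge leq_pmulr.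
have hle : P * q0 ^ j <= n by rewrite leqNgt; apply/negP => /hmin; rewrite ltnn.
set m := P * q0 ^ j.+1 in hj *.
have m0 : 0 < m by rewrite muln_gt0 P0 expn_gt0 q00.
have pm p : p \in primes m -> p \in T \/ p = q0.
  rewrite mem_primes => /and3P[pp _]; rewrite Euclid_dvdM // Euclid_dvdX //.
  case/orP => [|/andP[]]; last by rewrite dvdn_prime2 // => /eqP ->; right.
  rewrite Euclid_dvd_prod // big_has => /hasP [i iT pi]; left.
  have ip : prime i by move/allP: pT; apply.
  by move: pi; rewrite dvdn_prime2 // => /eqP ->.
have Sm0 : 0 < Sr r m.
  apply: Sr_gt0 => p /pm [pT'|->//]; by move/allP: rT; apply.
have Hlt := Fn m (conj m0 Sm0) hj.
have sT : {subset T <= primes m}.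
  move=> p pT'; rewrite mem_primes m0 /=; move/allP: pT => /(_ p pT') -> /=.
  apply: dvdn_mulr; rewrite /P (big_rem p) //=; exact: dvdn_mulr.
have hS := Sr_T m0 Sm0 uT sT.
have hm : m <= q0 * n by rewrite /m expnSr mulnA mulnC leq_mul2l hle orbT.
have hw := omega_bound (conj n0 Sn0).
set Q := r.+1 ^ K in hT.
have hw2 : n <= Q * Sr r n.
  apply: leq_trans hw _; rewrite leq_mul2r; apply/orP; right.
  by apply: leq_pexp2l => //; apply: ltnW.
have : Sr r m * (P * Q) < Sr r n * (P * Q).
  apply: (@leq_ltn_trans (n * (q0 * Q * Bv))).
    rewrite mulnA; apply: (@leq_trans (q0 * n * Bv * Q)).
      by rewrite leq_mul2r (leq_trans hS) ?orbT // leq_mul2r hm orbT.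
    by rewrite -!mulnA (mulnC Bv Q) mulnCA.
  apply: (@leq_trans (n * P)); first by rewrite ltn_pmul2l.
  by rewrite mulnA [Sr r n * P]mulnC -mulnA [n * P]mulnC leq_mul2l (mulnC (Sr r n)) hw2 orbT.
by rewrite ltn_pmul2r ?muln_gt0 ?P0 ?expn_gt0 // ltnNge ltnW.
Qed.
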